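(* In a generalised differential Seely category, for every $X\in\mathscr C$ and $A\in\mathcal L$, the morphism $\partial^X_A:(X,!A\otimes A)\to(X,!A)$ satisfies the linear rule in the fibre over $X$: $\partial^X_A;\mathbf d^X_A=\mathbf w^X_A\otimes_X\mathrm{id}_{(X,A)}$.
   Context: Composition is diagrammatic; monoidal categories are strict. Setting: an LNL adjunction $\mathcal F\dashv\mathcal U$, $\mathcal F:\mathscr C\to\mathcal L$, between cartesian $(\mathscr C,\times,I)$ and symmetric monoidal $(\mathcal L,\otimes,1)$ (symmetry $\sigma$); $\mathcal U$ lax monoidal via $n_{A,B}$; $\mathcal F$ strong monoidal via isomorphisms $m_{X,Y}:\mathcal F(X)\otimes\mathcal F(Y)\to\mathcal F(X\times Y)$, $m_1$; unit $\eta$, counit $\mathbf d$, comonad $!=\mathcal F\mathcal U$; $\mathbf c_X:=\mathcal F(\Delta_X);m_{X,X}^{-1}$, $\mathbf w_X:=\mathcal F(t_X);m_1^{-1}$; $\mathbf c_A:=\mathbf c_{\mathcal U(A)}$, $\mathbf w_A:=\mathbf w_{\mathcal U(A)}$. $LS(\mathscr C)$: objects $(X,A)$; morphisms $(f,u):(X,A)\to(Y,B)$ with $f:X\to Y$, $u:\mathcal F(X)\otimes A\to B$; composition $(f,u);(g,v)=(f;g,(\mathbf c_X\otimes\mathrm{id}_A);(\mathcal F(f)\otimes u);v)$; identity $(\mathrm{id}_X,\mathbf w_X\otimes\mathrm{id}_A)$; $\mathbf{ls}(f,u)=f$; fibre $LS(\mathscr C)_X$ = objects $(X,A)$, morphisms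 $(\mathrm{id}_X,u)$, with $(X,A)\otimes_X(X,B)=(X,A\otimes B)$ and $(\mathrm{id}_X,u)\otimes_X(\mathrm{id}_X,v)=(\mathrm{id}_X,(\mathbf c_X\otimes\mathrm{id});(\mathrm{id}\otimes\sigma_{\mathcal F(X),A}\otimes\mathrm{id});(u\otimes v))$. With biproducts $\oplus$ in $\mathcal L$: fibrewise injections $\iota^X_i=(\mathrm{id}_X,\mathbf w_X\otimes\iota_i)$; products in $LS(\mathscr C)$: $(X\times Y,A\oplus B)$, projections $(\pi_i,\mathbf w_{X\times Y}\otimes\pi_i)$. GDSC: $\mathcal L$ additive (CMon-enriched, $\otimes$ bilinear) with finite products, and $\mathcal T:\mathscr C\to LS(\mathscr C)$ with: (t.1) $\mathbf{ls}\circ\mathcal T=\mathrm{id}$, $\mathcal T(X)=(X,\lambda(X))$, and $\varphi_{X,Y}:=\langle\mathcal T(\pi_1),\mathcal T(\pi_2)\rangle:\mathcal T(X\times Y)\to(X\times Y,\lambda(X)\oplus\lambda(Y))$ iso; (t.2) $\mathcal T(\mathcal U(A))=(\mathcal U(A),A)$; (t.3) with $i^{X,Y}_2:=\iota^{X\times Y}_2;\varphi^{-1}_{X,Y}$, $⦃(f,u)⦄:=\langle\pi_1;f,(\eta_X\times\mathrm{id});n_{\mathcal F(X),A};\mathcal U(u)\rangle$, $W(f,u):=(⦃(f,u)⦄,(\mathcal F(\pi_1)\otimes\mathrm{id}_A);u)$: $W(f,u);i^{Y,\mathcal U(B)}_2=i^{X,\mathcal U(A)}_2;\mathcal T(⦃(f,u)⦄)$.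 Differential: for $h:X\to Y$ with $\mathcal T(h)=(h,v)$, $\mathrm D(h):=(\mathrm{id}_X,v)$; for $h:X\times Y\to Z$, $\mathrm D_2(h):=i^{X,Y}_2;\mathrm D(h)$. $\mathscr D^X_A:=\mathrm D_2(\pi_2;\eta_{\mathcal U(A)}):(X\times\mathcal U(A),A)\to(X\times\mathcal U(A),!A)$. The functor $\Sigma_{(X,A)}:LS(\mathscr C)_{X\times\mathcal U(A)}\to LS(\mathscr C)_X$: $(X\times\mathcal U(A),B)\mapsto(X,!A\otimes B)$, $(\mathrm{id},u)\mapsto(\mathrm{id}_X,(\mathrm{id}_{\mathcal F(X)}\otimes\mathbf c_A\otimes\mathrm{id}_B);(\sigma_{\mathcal F(X),!A}\otimes\mathrm{id}_{!A\otimes B});(\mathrm{id}_{!A}\otimes((m_{X,\mathcal U(A)}\otimes\mathrm{id}_B);u)))$. $\mu^{(X,A)}_{(X,B)}:=(\mathrm{id}_X,\mathbf w_X\otimes\mathbf w_A\otimes\mathrm{id}_B):(X,!A\otimes B)\to(X,B)$. Deriving transform: $\partial^X_A:=\Sigma_{(X,A)}(\mathscr D^X_A);\mu^{(X,A)}_{(X,!A)}:(X,!A\otimes A)\to(X,!A)$. Fibrewise structure: $\mathbf d^X_A:=(\mathrm{id}_X,\mathbf w_X\otimes\mathbf d_A):(X,!A)\to(X,A)$, $\mathbf w^X_A:=(\mathrm{id}_X,\mathbf w_X\otimes\mathbf w_A):(X,!A)\to(X,1)$. *)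

(* Defs.v *)
(* Categories are presented "untyped": a type of objects, a type of ALL
   morphisms, domain/codomain maps and a total composition operation whose
   laws are only assumed on composable pairs.  This makes the strictness of
   the monoidal structure on L expressible as plain equations. Composition is
   diagrammatic: [f ;; g] is "first f, then g". *)

Set Implicit Arguments.

Record Cat := mkCat {
  ob : Type;
  mor : Type;
  dom : mor -> ob;
  cod : mor -> ob;
  idm : ob -> mor;
  cmp : mor -> mor -> mor;
  dom_idm : forall a, dom (idm a) = a;
  cod_idm : forall a, cod (idm a) = a;
  dom_cmp : forall f g, cod f = dom g -> dom (cmp f g) = dom f;
  cod_cmp : forall f g, cod f = dom g -> cod (cmp f g) = cod g;
  cmp_idl : forall f, cmp (idm (dom f)) f = f;
  cmp_idr : forall f, cmp f (idm (cod f)) = f;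
  cmp_assoc : forall f g h, cod f = dom g -> cod g = dom h ->
      cmp (cmp f g) h = cmp f (cmp g h)
}.
Arguments dom {c} _.
Arguments cod {c} _.
Arguments idm {c} _.
Arguments cmp {c} _ _.

Notation "f ;; g" := (cmp f g) (at level 40, left associativity).

Definition Hom {c : Cat} (f : mor c) (a b : ob c) : Prop := dom f = a /\ cod f = b.

Record CartCat := {
  cc : Cat;
  prd : ob cc -> ob cc -> ob cc;
  trm : ob cc;
  p1 : ob cc -> ob cc -> mor cc;
  p2 : ob cc -> ob cc -> mor cc;
  pr : mor cc -> mor cc -> mor cc;
  bng : ob cc -> mor cc;
  p1_hom : forall X Y, Hom (p1 X Y) (prd X Y) X;
  p2_hom : forall X Y, Hom (p2 X Y) (prd X Y) Y;
  pr_hom : forall f g, dom f = dom g -> Hom (pr f g) (dom f) (prd (cod f) (cod g));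
  pr_p1 : forall f g, dom f = dom g -> pr f g ;; p1 (cod f) (cod g) = f;
  pr_p2 : forall f g, dom f = dom g -> pr f g ;; p2 (cod f) (cod g) = g;
  pr_eta : forall h X Y, cod h = prd X Y -> pr (h ;; p1 X Y) (h ;; p2 X Y) = h;
  bng_hom : forall X, Hom (bng X) X trm;
  bng_uniq : forall h, cod h = trm -> h = bng (dom h)
}.
Arguments prd {_} _ _.
Arguments trm {_}.
Arguments p1 {_} _ _.
Arguments p2 {_} _ _.
Arguments pr {_} _ _.
Arguments bng {_} _.

Section CartDefs.
Variable K : CartCat.
Definition prm (f g : mor (cc K)) : mor (cc K) :=
  pr (p1 (dom f) (dom g) ;; f) (p2 (dom f) (dom g) ;; g).
Definition diag (X : ob (cc K)) : mor (cc K) := pr (idm X) (idm X).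
Definition swp (X Y : ob (cc K)) : mor (cc K) := pr (p2 X Y) (p1 X Y).
Definition assc (X Y Z : ob (cc K)) : mor (cc K) :=
  pr (p1 (prd X Y) Z ;; p1 X Y) (pr (p1 (prd X Y) Z ;; p2 X Y) (p2 (prd X Y) Z)).
End CartDefs.
Arguments prm {K} _ _.
Arguments diag {K} _.
Arguments swp {K} _ _.
Arguments assc {K} _ _ _.

(* A strict symmetric monoidal category which is additive (CMon-enriched,
   tensor bilinear) with finite products (= biproducts, plus a zero object). *)
Record AddSMCat := {
  sc : Cat;
  tn : ob sc -> ob sc -> ob sc;
  un : ob sc;
  tm : mor sc -> mor sc -> mor sc;
  sg : ob sc -> ob sc -> mor sc;
  tm_dom : forall f g, dom (tm f g) = tn (dom f) (dom g);
  tm_cod : forall f g, cod (tm f g) = tn (cod f) (cod g);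
  tm_id : forall a b, tm (idm a) (idm b) = idm (tn a b);
  tm_cmp : forall f f' g g', cod f = dom g -> cod f' = dom g' ->
      tm (f ;; g) (f' ;; g') = tm f f' ;; tm g g';
  tn_assoc : forall a b c, tn (tn a b) c = tn a (tn b c);
  tn_unl : forall a, tn un a = a;
  tn_unr : forall a, tn a un = a;
  tm_assoc : forall f g h, tm (tm f g) h = tm f (tm g h);
  tm_unl : forall f, tm (idm un) f = f;
  tm_unr : forall f, tm f (idm un) = f;
  sg_hom : forall a b, Hom (sg a b) (tn a b) (tn b a);
  sg_nat : forall f g, tm f g ;; sg (cod f) (cod g) = sg (dom f) (dom g) ;; tm g f;
  sg_inv : forall a b, sg a b ;; sg b a = idm (tn a b);
  sg_hex : forall a b c, sg a (tn b c) = tm (sg a b) (idm c) ;; tm (idm b) (sg a c);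
  zr : ob sc -> ob sc -> mor sc;
  ad : mor sc -> mor sc -> mor sc;
  zr_hom : forall a b, Hom (zr a b) a b;
  ad_hom : forall f g a b, Hom f a b -> Hom g a b -> Hom (ad f g) a b;
  ad_comm : forall f g a b, Hom f a b -> Hom g a b -> ad f g = ad g f;
  ad_assoc : forall f g h a b, Hom f a b -> Hom g a b -> Hom h a b ->
      ad (ad f g) h = ad f (ad g h);
  ad_zr : forall f a b, Hom f a b -> ad f (zr a b) = f;
  cmp_adl : forall f g h a b, Hom f a b -> Hom g a b -> dom h = b ->
      ad f g ;; h = ad (f ;; h) (g ;; h);
  cmp_adr : forall f g h a b, Hom f a b -> Hom g a b -> cod h = a ->
      h ;; ad f g = ad (h ;; f) (h ;; g);
  cmp_zrl : forall a b h, dom h = b -> zr a b ;; h = zr a (cod h);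
  cmp_zrr : forall a b h, cod h = a -> h ;; zr a b = zr (dom h) b;
  tm_adl : forall f g h a b, Hom f a b -> Hom g a b ->
      tm (ad f g) h = ad (tm f h) (tm g h);
  tm_adr : forall f g h a b, Hom f a b -> Hom g a b ->
      tm h (ad f g) = ad (tm h f) (tm h g);
  tm_zrl : forall a b h, tm (zr a b) h = zr (tn a (dom h)) (tn b (cod h));
  tm_zrr : forall a b h, tm h (zr a b) = zr (tn (dom h) a) (tn (cod h) b);
  bp : ob sc -> ob sc -> ob sc;
  i1 : ob sc -> ob sc -> mor sc;
  i2 : ob sc -> ob sc -> mor sc;
  q1 : ob sc -> ob sc -> mor sc;
  q2 : ob sc -> ob sc -> mor sc;
  i1_hom : forall a b, Hom (i1 a b) a (bp a b);
  i2_hom : forall a b, Hom (i2 a b) b (bp a b);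
  q1_hom : forall a b, Hom (q1 a b) (bp a b) a;
  q2_hom : forall a b, Hom (q2 a b) (bp a b) b;
  i1_q1 : forall a b, i1 a b ;; q1 a b = idm a;
  i2_q2 : forall a b, i2 a b ;; q2 a b = idm b;
  i1_q2 : forall a b, i1 a b ;; q2 a b = zr a b;
  i2_q1 : forall a b, i2 a b ;; q1 a b = zr b a;
  bp_id : forall a b, ad (q1 a b ;; i1 a b) (q2 a b ;; i2 a b) = idm (bp a b);
  zo : ob sc;
  zo_id : idm zo = zr zo zo
}.
Arguments tn {_} _ _.
Arguments un {_}.
Arguments tm {_} _ _.
Arguments sg {_} _ _.
Arguments zr {_} _ _.
Arguments ad {_} _ _.
Arguments bp {_} _ _.
Arguments i1 {_} _ _.
Arguments i2 {_} _ _.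
Arguments q1 {_} _ _.
Arguments q2 {_} _ _.
Arguments zo {_}.

(* LNL adjunction F -| U : L -> C, F strong symmetric monoidal,
   U lax symmetric monoidal, unit and counit monoidal. *)
Record LNL := {
  LC : CartCat;
  LL : AddSMCat;
  Fo : ob (cc LC) -> ob (sc LL);
  Fm : mor (cc LC) -> mor (sc LL);
  Uo : ob (sc LL) -> ob (cc LC);
  Um : mor (sc LL) -> mor (cc LC);
  Fm_dom : forall f, dom (Fm f) = Fo (dom f);
  Fm_cod : forall f, cod (Fm f) = Fo (cod f);
  Fm_id : forall X, Fm (idm X) = idm (Fo X);
  Fm_cmp : forall f g, cod f = dom g -> Fm (f ;; g) = Fm f ;; Fm g;
  Um_dom : forall f, dom (Um f) = Uo (dom f);
  Um_cod : forall f, cod (Um f) = Uo (cod f);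
  Um_id : forall A, Um (idm A) = idm (Uo A);
  Um_cmp : forall f g, cod f = dom g -> Um (f ;; g) = Um f ;; Um g;
  et : ob (cc LC) -> mor (cc LC);
  ep : ob (sc LL) -> mor (sc LL);
  et_hom : forall X, Hom (et X) X (Uo (Fo X));
  ep_hom : forall A, Hom (ep A) (Fo (Uo A)) A;
  et_nat : forall f, f ;; et (cod f) = et (dom f) ;; Um (Fm f);
  ep_nat : forall g, Fm (Um g) ;; ep (cod g) = ep (dom g) ;; g;
  tri1 : forall X, Fm (et X) ;; ep (Fo X) = idm (Fo X);
  tri2 : forall A, et (Uo A) ;; Um (ep A) = idm (Uo A);
  mm : ob (cc LC) -> ob (cc LC) -> mor (sc LL);
  mmi : ob (cc LC) -> ob (cc LC) -> mor (sc LL);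
  m1 : mor (sc LL);
  m1i : mor (sc LL);
  mm_hom : forall X Y, Hom (mm X Y) (tn (Fo X) (Fo Y)) (Fo (prd X Y));
  mmi_hom : forall X Y, Hom (mmi X Y) (Fo (prd X Y)) (tn (Fo X) (Fo Y));
  mm_mmi : forall X Y, mm X Y ;; mmi X Y = idm (tn (Fo X) (Fo Y));
  mmi_mm : forall X Y, mmi X Y ;; mm X Y = idm (Fo (prd X Y));
  m1_hom : Hom m1 un (Fo trm);
  m1i_hom : Hom m1i (Fo trm) un;
  m1_m1i : m1 ;; m1i = idm un;
  m1i_m1 : m1i ;; m1 = idm (Fo trm);
  mm_nat : forall f g, tm (Fm f) (Fm g) ;; mm (cod f) (cod g)
                       = mm (dom f) (dom g) ;; Fm (prm f g);
  mm_assoc : forall X Y Z,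
      tm (mm X Y) (idm (Fo Z)) ;; mm (prd X Y) Z ;; Fm (assc X Y Z)
      = tm (idm (Fo X)) (mm Y Z) ;; mm X (prd Y Z);
  mm_unl : forall X, tm m1 (idm (Fo X)) ;; mm trm X ;; Fm (p2 trm X) = idm (Fo X);
  mm_unr : forall X, tm (idm (Fo X)) m1 ;; mm X trm ;; Fm (p1 X trm) = idm (Fo X);
  mm_sym : forall X Y, sg (Fo X) (Fo Y) ;; mm Y X = mm X Y ;; Fm (swp X Y);
  nn : ob (sc LL) -> ob (sc LL) -> mor (cc LC);
  n0 : mor (cc LC);
  nn_hom : forall A B, Hom (nn A B) (prd (Uo A) (Uo B)) (Uo (tn A B));
  n0_hom : Hom n0 trm (Uo un);
  nn_nat : forall f g, prm (Um f) (Um g) ;; nn (cod f) (cod g)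
                       = nn (dom f) (dom g) ;; Um (tm f g);
  nn_assoc : forall A B D,
      prm (nn A B) (idm (Uo D)) ;; nn (tn A B) D
      = assc (Uo A) (Uo B) (Uo D) ;; prm (idm (Uo A)) (nn B D) ;; nn A (tn B D);
  nn_unl : forall A, prm n0 (idm (Uo A)) ;; nn un A = p2 trm (Uo A);
  nn_unr : forall A, prm (idm (Uo A)) n0 ;; nn A un = p1 (Uo A) trm;
  nn_sym : forall A B, swp (Uo A) (Uo B) ;; nn B A = nn A B ;; Um (sg A B);
  et_mon : forall X Y, prm (et X) (et Y) ;; nn (Fo X) (Fo Y) ;; Um (mm X Y) = et (prd X Y);
  et_mon1 : n0 ;; Um m1 = et trm;
  ep_mon : forall A B, mm (Uo A) (Uo B) ;; Fm (nn A B) ;; ep (tn A B) = tm (ep A) (ep B);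
  ep_mon1 : m1 ;; Fm n0 ;; ep un = idm un
}.

Section LNLDefs.
Variable G : LNL.
Local Notation CO := (ob (cc (LC G))).
Local Notation CM := (mor (cc (LC G))).
Local Notation LO := (ob (sc (LL G))).
Local Notation LM := (mor (sc (LL G))).

Definition wX (X : CO) : LM := Fm G (bng X) ;; m1i G.
Definition cX (X : CO) : LM := Fm G (diag X) ;; mmi G X X.
Definition bang (A : LO) : LO := Fo G (Uo G A).
Definition wA (A : LO) : LM := wX (Uo G A).
Definition cA (A : LO) : LM := cX (Uo G A).

(* Morphisms of LS(C): (f,u) : (X,A) -> (Y,B) with f : X -> Y in C and
   u : F(X) (x) A -> B in L.  The source component A is stored explicitly. *)
Record LSMor := mkLS { lsf : CM; lssrc : LO; lsu : LM }.

Definition LSHom (p : LSMor) (X : CO) (A : LO) (Y : CO) (B : LO) : Prop :=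
  Hom (lsf p) X Y /\ lssrc p = A /\ Hom (lsu p) (tn (Fo G X) A) B.

Definition LSid (X : CO) (A : LO) : LSMor := mkLS (idm X) A (tm (wX X) (idm A)).

Definition LScmp (p q : LSMor) : LSMor :=
  mkLS (lsf p ;; lsf q) (lssrc p)
       (tm (cX (dom (lsf p))) (idm (lssrc p)) ;; tm (Fm G (lsf p)) (lsu p) ;; lsu q).

Definition LSpair (p q : LSMor) : LSMor :=
  mkLS (pr (lsf p) (lsf q)) (lssrc p)
       (ad (lsu p ;; i1 (cod (lsu p)) (cod (lsu q)))
           (lsu q ;; i2 (cod (lsu p)) (cod (lsu q)))).

Definition fib_i2 (Z : CO) (A B : LO) : LSMor := mkLS (idm Z) B (tm (wX Z) (i2 A B)).

Definition fibtens (X : CO) (p q : LSMor) : LSMor :=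
  mkLS (idm X) (tn (lssrc p) (lssrc q))
       (tm (cX X) (idm (tn (lssrc p) (lssrc q)))
        ;; tm (idm (Fo G X)) (tm (sg (Fo G X) (lssrc p)) (idm (lssrc q)))
        ;; tm (lsu p) (lsu q)).

(* the functor T given by lam and Tv : T(f) = (f, Tv f) : (X, lam X) -> (Y, lam Y) *)
Definition Tmor (lam : CO -> LO) (Tv : CM -> LM) (f : CM) : LSMor :=
  mkLS f (lam (dom f)) (Tv f).

Definition phi (lam : CO -> LO) (Tv : CM -> LM) (X Y : CO) : LSMor :=
  LSpair (Tmor lam Tv (p1 X Y)) (Tmor lam Tv (p2 X Y)).

Definition i2XY (lam : CO -> LO) (phinv : CO -> CO -> LSMor) (X Y : CO) : LSMor :=
  LScmp (fib_i2 (prd X Y) (lam X) (lam Y)) (phinv X Y).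

Definition brace (p : LSMor) : CM :=
  pr (p1 (dom (lsf p)) (Uo G (lssrc p)) ;; lsf p)
     (prm (et G (dom (lsf p))) (idm (Uo G (lssrc p)))
      ;; nn G (Fo G (dom (lsf p))) (lssrc p) ;; Um G (lsu p)).

Definition Wm (p : LSMor) : LSMor :=
  mkLS (brace p) (lssrc p)
       (tm (Fm G (p1 (dom (lsf p)) (Uo G (lssrc p)))) (idm (lssrc p)) ;; lsu p).
End LNLDefs.

Arguments mkLS {G} _ _ _.
Arguments Tmor {G} _ _ _.
Arguments phi {G} _ _ _ _.
Arguments i2XY {G} _ _ _ _.
Arguments fibtens {G} _ _ _.
Arguments LScmp {G} _ _.
Arguments LSpair {G} _ _.
Arguments brace {G} _.
Arguments Wm {G} _.

Record GDSC := {
  base : LNL;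
  lam : ob (cc (LC base)) -> ob (sc (LL base));
  Tv : mor (cc (LC base)) -> mor (sc (LL base));
  (* T is a functor C -> LS(C) with ls o T = id  (t.1, first part) *)
  Tv_hom : forall f, Hom (Tv f) (tn (Fo base (dom f)) (lam (dom f))) (lam (cod f));
  T_id : forall X, Tmor lam Tv (idm X) = LSid base X (lam X);
  T_cmp : forall f g, cod f = dom g ->
      Tmor lam Tv (f ;; g) = LScmp (Tmor lam Tv f) (Tmor lam Tv g);
  phinv : ob (cc (LC base)) -> ob (cc (LC base)) -> LSMor base;
  phinv_hom : forall X Y,
      LSHom (phinv X Y) (prd X Y) (bp (lam X) (lam Y)) (prd X Y) (lam (prd X Y));
  phi_phinv : forall X Y,
      LScmp (phi lam Tv X Y) (phinv X Y) = LSid base (prd X Y) (lam (prd X Y));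
  phinv_phi : forall X Y,
      LScmp (phinv X Y) (phi lam Tv X Y) = LSid base (prd X Y) (bp (lam X) (lam Y));
  t2 : forall A, lam (Uo base A) = A;
  t3 : forall p : LSMor base,
      dom (lsu p) = tn (Fo base (dom (lsf p))) (lssrc p) ->
      LScmp (Wm p) (i2XY lam phinv (cod (lsf p)) (Uo base (cod (lsu p))))
      = LScmp (i2XY lam phinv (dom (lsf p)) (Uo base (lssrc p)))
              (Tmor lam Tv (brace p))
}.

Section GDefs.
Variable G : GDSC.
Local Notation B := (base G).
Local Notation CO := (ob (cc (LC B))).
Local Notation CM := (mor (cc (LC B))).
Local Notation LO := (ob (sc (LL B))).

Definition Dd (h : CM) : LSMor B := mkLS (idm (dom h)) (lam G (dom h)) (Tv G h).
Definition D2 (X Y : CO) (h : CM) : LSMor B := LScmp (i2XY (lam G) (phinv G) X Y) (Dd h).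
Definition Dcal (X : CO) (A : LO) : LSMor B :=
  D2 X (Uo B A) (p2 X (Uo B A) ;; et B (Uo B A)).

Definition Sigma (X : CO) (A : LO) (p : LSMor B) : LSMor B :=
  mkLS (idm X) (tn (bang B A) (lssrc p))
    (tm (tm (idm (Fo B X)) (cA B A)) (idm (lssrc p))
     ;; tm (sg (Fo B X) (bang B A)) (idm (tn (bang B A) (lssrc p)))
     ;; tm (idm (bang B A)) (tm (mm B X (Uo B A)) (idm (lssrc p)) ;; lsu p)).

Definition mu (X : CO) (A C : LO) : LSMor B :=
  mkLS (idm X) (tn (bang B A) C) (tm (tm (wX B X) (wA B A)) (idm C)).

Definition deriv (X : CO) (A : LO) : LSMor B :=
  LScmp (Sigma X A (Dcal X A)) (mu X A (bang B A)).

Definition derX (X : CO) (A : LO) : LSMor B :=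
  mkLS (idm X) (bang B A) (tm (wX B X) (ep B A)).
Definition wkX (X : CO) (A : LO) : LSMor B :=
  mkLS (idm X) (bang B A) (tm (wX B X) (wA B A)).
End GDefs.

(* Main.v *)
Require Import Defs.
From Stdlib Require Import Setoid.


Section S.
Variable G : GDSC.
Local Notation B := (base G).
Local Notation C := (cc (LC (base G))).
Local Notation L := (sc (LL (base G))).
Local Notation LL0 := (LL (base G)).
Local Notation LC0 := (LC (base G)).

Lemma dsg a b : dom (@sg LL0 a b) = tn a b. Proof. apply (sg_hom LL0). Qed.
Lemma csg a b : cod (@sg LL0 a b) = tn b a. Proof. apply (sg_hom LL0). Qed.
Lemma dzr a b : dom (@zr LL0 a b) = a. Proof. apply (zr_hom LL0). Qed.
Lemma czr a b : cod (@zr LL0 a b) = b. Proof. apply (zr_hom LL0). Qed.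
Lemma di1 a b : dom (@i1 LL0 a b) = a. Proof. apply (i1_hom LL0). Qed.
Lemma ci1 a b : cod (@i1 LL0 a b) = bp a b. Proof. apply (i1_hom LL0). Qed.
Lemma di2 a b : dom (@i2 LL0 a b) = b. Proof. apply (i2_hom LL0). Qed.
Lemma ci2 a b : cod (@i2 LL0 a b) = bp a b. Proof. apply (i2_hom LL0). Qed.
Lemma dq1 a b : dom (@q1 LL0 a b) = bp a b. Proof. apply (q1_hom LL0). Qed.
Lemma cq1 a b : cod (@q1 LL0 a b) = a. Proof. apply (q1_hom LL0). Qed.
Lemma dq2 a b : dom (@q2 LL0 a b) = bp a b. Proof. apply (q2_hom LL0). Qed.
Lemma cq2 a b : cod (@q2 LL0 a b) = b. Proof. apply (q2_hom LL0). Qed.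
Lemma dmm X Y : dom (mm B X Y) = tn (Fo B X) (Fo B Y). Proof. apply mm_hom. Qed.
Lemma cmm X Y : cod (mm B X Y) = Fo B (prd X Y). Proof. apply mm_hom. Qed.
Lemma dmmi X Y : dom (mmi B X Y) = Fo B (prd X Y). Proof. apply mmi_hom. Qed.
Lemma cmmi X Y : cod (mmi B X Y) = tn (Fo B X) (Fo B Y). Proof. apply mmi_hom. Qed.
Lemma dm1 : dom (m1 B) = un. Proof. apply m1_hom. Qed.
Lemma cm1 : cod (m1 B) = Fo B trm. Proof. apply m1_hom. Qed.
Lemma dm1i : dom (m1i B) = Fo B trm. Proof. apply m1i_hom. Qed.
Lemma cm1i : cod (m1i B) = un. Proof. apply m1i_hom. Qed.
Lemma dep A : dom (ep B A) = Fo B (Uo B A). Proof. apply ep_hom. Qed.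
Lemma cep A : cod (ep B A) = A. Proof. apply ep_hom. Qed.
Lemma dTv f : dom (Tv G f) = tn (Fo B (dom f)) (lam G (dom f)). Proof. apply Tv_hom. Qed.
Lemma cTv f : cod (Tv G f) = lam G (cod f). Proof. apply Tv_hom. Qed.
Lemma dp1 X Y : dom (@p1 LC0 X Y) = prd X Y. Proof. apply p1_hom. Qed.
Lemma cp1 X Y : cod (@p1 LC0 X Y) = X. Proof. apply p1_hom. Qed.
Lemma dp2 X Y : dom (@p2 LC0 X Y) = prd X Y. Proof. apply p2_hom. Qed.
Lemma cp2 X Y : cod (@p2 LC0 X Y) = Y. Proof. apply p2_hom. Qed.
Lemma dbng X : dom (@bng LC0 X) = X. Proof. apply bng_hom. Qed.
Lemma cbng X : cod (@bng LC0 X) = trm. Proof. apply bng_hom. Qed.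
Lemma det X : dom (et B X) = X. Proof. apply et_hom. Qed.
Lemma cet X : cod (et B X) = Uo B (Fo B X). Proof. apply et_hom. Qed.
Lemma dnn a b : dom (nn B a b) = prd (Uo B a) (Uo B b). Proof. apply nn_hom. Qed.
Lemma cnn a b : cod (nn B a b) = Uo B (tn a b). Proof. apply nn_hom. Qed.
Lemma dn0 : dom (n0 B) = trm. Proof. apply n0_hom. Qed.
Lemma cn0 : cod (n0 B) = Uo B un. Proof. apply n0_hom. Qed.
Lemma dpr (f g : mor C) : dom f = dom g -> dom (pr f g) = dom f. Proof. intro H; apply (pr_hom _ f g H). Qed.
Lemma cpr (f g : mor C) : dom f = dom g -> cod (pr f g) = prd (cod f) (cod g). Proof. intro H; apply (pr_hom _ f g H). Qed.
Lemma dad (f g : mor L) : dom f = dom g -> cod f = cod g -> dom (ad f g) = dom f.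
Proof. intros H1 H2. assert (Hf: Hom f (dom f) (cod f)) by (split; auto).
assert (Hg: Hom g (dom f) (cod f)) by (split; auto). apply (ad_hom _ Hf Hg). Qed.
Lemma cad (f g : mor L) : dom f = dom g -> cod f = cod g -> cod (ad f g) = cod f.
Proof. intros H1 H2. assert (Hf: Hom f (dom f) (cod f)) by (split; auto).
assert (Hg: Hom g (dom f) (cod f)) by (split; auto). apply (ad_hom _ Hf Hg). Qed.
Lemma bang_e A : bang B A = Fo B (Uo B A). Proof. reflexivity. Qed.

End S.

Hint Rewrite dom_idm cod_idm tm_dom tm_cod Fm_dom Fm_cod Um_dom Um_cod
  dsg csg dzr czr di1 ci1 di2 ci2 dq1 cq1 dq2 cq2 dmm cmm dmmi cmmi dm1 cm1 dm1i cm1i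
  dep cep dTv cTv dp1 cp1 dp2 cp2 dbng cbng det cet dnn cnn dn0 cn0 bang_e : dcU.
Hint Rewrite tn_unl tn_unr tn_assoc t2 : obn.

Ltac dcstep eqt :=
  first [ progress autorewrite with dcU
        | progress (unfold wX, cX, wA, cA, prm, diag, swp, assc)
        | rewrite dom_cmp by eqt | rewrite cod_cmp by eqt
        | rewrite dpr by eqt | rewrite cpr by eqt
        | rewrite dad by eqt | rewrite cad by eqt
        | match goal with H : dom ?x = _ |- context[dom ?x] => rewrite H end
        | match goal with H : cod ?x = _ |- context[cod ?x] => rewrite H end ].
Ltac dc_eq := repeat (dcstep dc_eq); autorewrite with obn; reflexivity.
Ltac dc := repeat (dcstep dc_eq).


Ltac ra := repeat (rewrite cmp_assoc by dc_eq).
Lemma cmp_idr' (c : Cat) (f : mor c) a : cod f = a -> f ;; idm a = f.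
Proof. intros <-; apply cmp_idr. Qed.
Lemma cmp_idl' (c : Cat) (f : mor c) a : dom f = a -> idm a ;; f = f.
Proof. intros <-; apply cmp_idl. Qed.
Ltac idl := rewrite cmp_idl' by dc_eq.
Ltac idr := rewrite cmp_idr' by dc_eq.

Section S.
Variable G : GDSC.
Local Notation B := (base G).
Local Notation C := (cc (LC (base G))).
Local Notation L := (sc (LL (base G))).
Local Notation LL0 := (LL (base G)).
Local Notation LC0 := (LC (base G)).


Lemma pr_p1' (f g : mor C) X Y : dom f = dom g -> cod f = X -> cod g = Y -> pr f g ;; p1 X Y = f.
Proof. intros H <- <-. apply pr_p1; auto. Qed.
Lemma pr_p2' (f g : mor C) X Y : dom f = dom g -> cod f = X -> cod g = Y -> pr f g ;; p2 X Y = g.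
Proof. intros H <- <-. apply pr_p2; auto. Qed.
Lemma pr_ext (a b : mor C) X Y : cod a = prd X Y -> cod b = prd X Y ->
  a ;; p1 X Y = b ;; p1 X Y -> a ;; p2 X Y = b ;; p2 X Y -> a = b.
Proof. intros Ha Hb H1 H2. rewrite <- (pr_eta _ a X Y Ha), <- (pr_eta _ b X Y Hb), H1, H2. reflexivity. Qed.
Lemma pr_cmp (h f g : mor C) : cod h = dom f -> dom f = dom g -> h ;; pr f g = pr (h ;; f) (h ;; g).
Proof. intros H1 H2. apply (pr_ext _ _ (cod f) (cod g)).
 - dc_eq. - dc_eq.
 - rewrite pr_p1' by dc_eq. ra. rewrite pr_p1' by dc_eq. reflexivity.
 - rewrite pr_p2' by dc_eq. ra. rewrite pr_p2' by dc_eq. reflexivity.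
Qed.
Lemma bng_u (h : mor C) X : cod h = trm -> dom h = X -> h = bng X.
Proof. intros H <-. apply bng_uniq; auto. Qed.

Lemma w_nat (f : mor C) : Fm B f ;; wX B (cod f) = wX B (dom f).
Proof. unfold wX. rewrite <- cmp_assoc by dc_eq. rewrite <- Fm_cmp by dc_eq.
 rewrite (bng_u (f ;; bng (cod f)) (dom f)) by dc_eq. reflexivity. Qed.

Lemma tm_m1i X : tm (m1i B) (idm (Fo B X)) = mm B trm X ;; Fm B (p2 trm X).
Proof.
 transitivity (tm (m1i B) (idm (Fo B X)) ;; (tm (m1 B) (idm (Fo B X)) ;; mm B trm X ;; Fm B (p2 trm X))).
 - rewrite mm_unl. rewrite cmp_idr' by dc_eq. reflexivity.
 - rewrite <- !cmp_assoc by dc_eq. rewrite <- tm_cmp by dc_eq. rewrite m1i_m1, (cmp_idl' _ (idm _)), tm_id by dc_eq.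
   ra. apply cmp_idl'. dc_eq.
Qed.
Lemma tm_m1i_r X : tm (idm (Fo B X)) (m1i B) = mm B X trm ;; Fm B (p1 X trm).
Proof.
 transitivity (tm (idm (Fo B X)) (m1i B) ;; (tm (idm (Fo B X)) (m1 B) ;; mm B X trm ;; Fm B (p1 X trm))).
 - rewrite mm_unr. rewrite cmp_idr' by dc_eq. reflexivity.
 - rewrite <- !cmp_assoc by dc_eq. rewrite <- tm_cmp by dc_eq. rewrite m1i_m1, (cmp_idl' _ (idm _)), tm_id by dc_eq.
   ra. apply cmp_idl'. dc_eq.
Qed.


Lemma tm_cmp_l (f g : mor L) a : cod f = dom g -> tm (f ;; g) (idm a) = tm f (idm a) ;; tm g (idm a).
Proof. intro H. rewrite <- tm_cmp by dc_eq. rewrite (cmp_idl' _ (idm a)) by dc_eq. reflexivity. Qed.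
Lemma tm_cmp_r (f g : mor L) a : cod f = dom g -> tm (idm a) (f ;; g) = tm (idm a) f ;; tm (idm a) g.
Proof. intro H. rewrite <- tm_cmp by dc_eq. rewrite (cmp_idl' _ (idm a)) by dc_eq. reflexivity. Qed.
Lemma tm_split (f g : mor L) : tm f g = tm f (idm (dom g)) ;; tm (idm (cod f)) g.
Proof. rewrite <- tm_cmp by dc_eq. rewrite cmp_idl, cmp_idr. reflexivity. Qed.
Lemma tm_split' (f g : mor L) : tm f g = tm (idm (dom f)) g ;; tm f (idm (cod g)).
Proof. rewrite <- tm_cmp by dc_eq. rewrite cmp_idl, cmp_idr. reflexivity. Qed.

Lemma sg_un a : @sg LL0 a un = idm a.
Proof.
 assert (H := sg_hex LL0 a un un). rewrite tm_unl, tm_unr in H. rewrite tn_unl in H.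
 assert (H2 := sg_inv LL0 a un). rewrite tn_unr in H2.
 transitivity (sg a un ;; (sg a un ;; sg un a)).
 - rewrite H2. rewrite cmp_idr' by dc_eq. reflexivity.
 - rewrite <- cmp_assoc by dc_eq. rewrite <- H. exact H2.
Qed.

Lemma mm_nat' (f g : mor C) X Y X' Y' : dom f = X -> dom g = Y -> cod f = X' -> cod g = Y' ->
  tm (Fm B f) (Fm B g) ;; mm B X' Y' = mm B X Y ;; Fm B (prm f g).
Proof. intros <- <- <- <-. apply mm_nat. Qed.
Lemma mmi_nat (f g : mor C) X Y X' Y' : dom f = X -> dom g = Y -> cod f = X' -> cod g = Y' ->
  mmi B X Y ;; tm (Fm B f) (Fm B g) = Fm B (prm f g) ;; mmi B X' Y'.
Proof. intros H1 H2 H3 H4.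
 transitivity (mmi B X Y ;; tm (Fm B f) (Fm B g) ;; (mm B X' Y' ;; mmi B X' Y')).
 - rewrite mm_mmi. rewrite cmp_idr' by dc_eq. reflexivity.
 - rewrite <- cmp_assoc by dc_eq. rewrite (cmp_assoc _ (mmi B X Y)) by dc_eq.
   rewrite (mm_nat' f g X Y X' Y') by auto. rewrite <- cmp_assoc by dc_eq. rewrite mmi_mm.
   idl. reflexivity.
Qed.

Lemma prm_p2 (f g : mor C) X' Y' : cod f = X' -> cod g = Y' -> prm f g ;; p2 X' Y' = p2 (dom f) (dom g) ;; g.
Proof. intros. unfold prm. apply pr_p2'; dc_eq. Qed.
Lemma prm_p1 (f g : mor C) X' Y' : cod f = X' -> cod g = Y' -> prm f g ;; p1 X' Y' = p1 (dom f) (dom g) ;; f.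
Proof. intros. unfold prm. apply pr_p1'; dc_eq. Qed.
Lemma diag_p1 (X : ob C) : diag X ;; p1 X X = idm X.
Proof. unfold diag. apply pr_p1'; dc_eq. Qed.
Lemma diag_p2 (X : ob C) : diag X ;; p2 X X = idm X.
Proof. unfold diag. apply pr_p2'; dc_eq. Qed.
Lemma diag_prm (f g : mor C) X : dom f = X -> dom g = X -> diag X ;; prm f g = pr f g.
Proof. intros H1 H2. subst X. unfold prm. rewrite pr_cmp by dc_eq. rewrite <- !cmp_assoc by dc_eq.
 rewrite H2. rewrite diag_p1, diag_p2. idl. idl. reflexivity. Qed.

Lemma counit_l X : cX B X ;; tm (wX B X) (idm (Fo B X)) = idm (Fo B X).
Proof. unfold cX, wX. rewrite tm_cmp_l by dc_eq. rewrite tm_m1i.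
 rewrite <- (Fm_id B X) at 1. ra.
 rewrite <- (cmp_assoc _ (tm _ _) (mm _ _ _)) by dc_eq.
 rewrite (mm_nat' (bng X) (idm X) X X) by dc_eq.
 ra.  ra. rewrite <- (cmp_assoc _ (mmi _ _ _) (mm _ _ _)) by dc_eq. rewrite mmi_mm. idl.
 rewrite <- !Fm_cmp by dc_eq. rewrite prm_p2 by dc_eq. autorewrite with dcU.
 rewrite cmp_idr' by dc_eq. rewrite diag_p2. apply Fm_id. Qed.

Lemma counit_r X : cX B X ;; tm (idm (Fo B X)) (wX B X) = idm (Fo B X).
Proof. unfold cX, wX. rewrite tm_cmp_r by dc_eq. rewrite tm_m1i_r.
 rewrite <- (Fm_id B X) at 1. ra.
 rewrite <- (cmp_assoc _ (tm _ _) (mm _ _ _)) by dc_eq.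
 rewrite (mm_nat' (idm X) (bng X) X X) by dc_eq.
 ra. rewrite <- (cmp_assoc _ (mmi _ _ _) (mm _ _ _)) by dc_eq. rewrite mmi_mm. idl.
 rewrite <- !Fm_cmp by dc_eq. rewrite prm_p1 by dc_eq. autorewrite with dcU.
 rewrite cmp_idr' by dc_eq. rewrite diag_p1. apply Fm_id. Qed.

Lemma c_nat (f : mor C) : Fm B f ;; cX B (cod f) = cX B (dom f) ;; tm (Fm B f) (Fm B f).
Proof. unfold cX. ra. rewrite (mmi_nat f f (dom f) (dom f) (cod f) (cod f)) by dc_eq.
 rewrite <- !cmp_assoc by dc_eq. rewrite <- !Fm_cmp by dc_eq. f_equal. f_equal.
 rewrite diag_prm by dc_eq. unfold diag. rewrite pr_cmp by dc_eq. idr. reflexivity. Qed.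

Lemma mmi_assoc X Y Z : mmi B (prd X Y) Z ;; tm (mmi B X Y) (idm (Fo B Z))
  = Fm B (assc X Y Z) ;; mmi B X (prd Y Z) ;; tm (idm (Fo B X)) (mmi B Y Z).
Proof.
 assert (H := mm_assoc B X Y Z).
 transitivity (mmi B (prd X Y) Z ;; tm (mmi B X Y) (idm (Fo B Z)) ;;
    ((tm (idm (Fo B X)) (mm B Y Z) ;; mm B X (prd Y Z)) ;; (mmi B X (prd Y Z) ;; tm (idm (Fo B X)) (mmi B Y Z)))).
 - symmetry. rewrite (cmp_assoc _ (tm _ _)) by dc_eq.
   rewrite <- (cmp_assoc _ (mm _ _ _) (mmi _ _ _)) by dc_eq. rewrite mm_mmi. idl.
   rewrite <- tm_cmp by dc_eq. rewrite mm_mmi. idl. rewrite tm_id. idr. reflexivity.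
 - rewrite <- H. ra. rewrite <- (cmp_assoc _ (tm (mmi _ _ _) _) (tm _ _)) by dc_eq.
   rewrite <- tm_cmp by dc_eq. rewrite mmi_mm. idl. rewrite tm_id.
   rewrite <- (cmp_assoc _ (mmi _ _ _) (idm _)) by dc_eq. idr.
   rewrite <- (cmp_assoc _ (mmi _ _ _) (mm _ _ _)) by dc_eq. rewrite mmi_mm. idl. reflexivity.
Qed.

Lemma cart_coassoc (X : ob C) : diag X ;; prm (diag X) (idm X) ;; assc X X X = diag X ;; prm (idm X) (diag X).
Proof. rewrite !diag_prm by dc_eq. unfold assc. rewrite pr_cmp by dc_eq.
 rewrite <- cmp_assoc by dc_eq. rewrite pr_p1' by dc_eq. rewrite diag_p1.
 rewrite pr_cmp by dc_eq. rewrite <- cmp_assoc by dc_eq. rewrite pr_p1' by dc_eq. rewrite diag_p2.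
 rewrite pr_p2' by dc_eq. unfold diag. reflexivity. Qed.

Lemma coassoc X : cX B X ;; tm (cX B X) (idm (Fo B X)) = cX B X ;; tm (idm (Fo B X)) (cX B X).
Proof. unfold cX. rewrite tm_cmp_l, tm_cmp_r by dc_eq. rewrite <- !(Fm_id B X). ra.
 rewrite <- (cmp_assoc _ (mmi _ _ _) (tm (Fm _ (diag _)) _)) by dc_eq.
 rewrite <- (cmp_assoc _ (mmi _ _ _) (tm (Fm _ (idm _)) _)) by dc_eq.
 rewrite (mmi_nat (diag X) (idm X) X X (prd X X) X) by dc_eq.
 rewrite (mmi_nat (idm X) (diag X) X X X (prd X X)) by dc_eq. rewrite !Fm_id. autorewrite with dcU. unfold diag at 2 4.
 autorewrite with dcU. fold (diag X).
 rewrite (cmp_assoc _ (Fm _ (prm _ _)) (mmi _ _ _)) by dc_eq. 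
 rewrite mmi_assoc. rewrite <- !cmp_assoc by dc_eq. f_equal. f_equal.
 rewrite <- !Fm_cmp by dc_eq. f_equal. apply cart_coassoc. Qed.

Lemma mmi_w X Y : mmi B X Y ;; tm (wX B X) (wX B Y) = wX B (prd X Y).
Proof. unfold wX. rewrite tm_cmp by dc_eq. rewrite <- cmp_assoc by dc_eq.
 rewrite (mmi_nat (bng X) (bng Y) X Y trm trm) by dc_eq.
 rewrite (tm_split (m1i B) (m1i B)). autorewrite with dcU. rewrite tm_m1i, tm_unl.
 ra. rewrite <- (cmp_assoc _ (mmi _ _ _) (mm _ _ _)) by dc_eq. rewrite mmi_mm. idl.
 rewrite <- !cmp_assoc by dc_eq. rewrite <- Fm_cmp by dc_eq. f_equal. f_equal.
 apply bng_u; dc_eq. Qed.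

End S.



Section S.
Variable G : GDSC.
Local Notation B := (base G).
Local Notation C := (cc (LC (base G))).
Local Notation L := (sc (LL (base G))).
Local Notation LL0 := (LL (base G)).
Local Notation LC0 := (LC (base G)).

Lemma dwX X : dom (wX B X) = Fo B X. Proof. dc_eq. Qed.
Lemma cwX X : cod (wX B X) = un. Proof. dc_eq. Qed.
Lemma dcX X : dom (cX B X) = Fo B X. Proof. dc_eq. Qed.
Lemma ccX X : cod (cX B X) = tn (Fo B X) (Fo B X). Proof. dc_eq. Qed.
Lemma dwA a : dom (wA B a) = Fo B (Uo B a). Proof. dc_eq. Qed.
Lemma cwA a : cod (wA B a) = un. Proof. dc_eq. Qed.
Lemma dcA a : dom (cA B a) = Fo B (Uo B a). Proof. dc_eq. Qed.
Lemma ccA a : cod (cA B a) = tn (Fo B (Uo B a)) (Fo B (Uo B a)). Proof. dc_eq. Qed.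
End S.
Hint Rewrite dwX cwX dcX ccX dwA cwA dcA ccA : dcU.
Section S2.
Variable G : GDSC.
Local Notation B := (base G).
Local Notation C := (cc (LC (base G))).
Local Notation L := (sc (LL (base G))).
Local Notation LL0 := (LL (base G)).
Local Notation LC0 := (LC (base G)).

Lemma tm_cmp_a (f g h : mor L) : cod f = dom g -> tm (f;;g) h = tm f (idm (dom h)) ;; tm g h.
Proof. intro. rewrite <- tm_cmp by dc_eq. idl. reflexivity. Qed.
Lemma tm_cmp_b (f g h : mor L) : cod f = dom g -> tm h (f;;g) = tm (idm (dom h)) f ;; tm h g.
Proof. intro. rewrite <- tm_cmp by dc_eq. idl. reflexivity. Qed.
Lemma tm_cmp_a' (f g h : mor L) : cod f = dom g -> tm (f;;g) h = tm f h ;; tm g (idm (cod h)).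
Proof. intro. rewrite <- tm_cmp by dc_eq. idr. reflexivity. Qed.
Lemma tm_cmp_b' (f g h : mor L) : cod f = dom g -> tm h (f;;g) = tm h f ;; tm (idm (cod h)) g.
Proof. intro. rewrite <- tm_cmp by dc_eq. idr. reflexivity. Qed.

Definition LSH (p : LSMor B) X A Y B' : Prop :=
  dom (lsf p) = X /\ cod (lsf p) = Y /\ lssrc p = A /\ dom (lsu p) = tn (Fo B X) A /\ cod (lsu p) = B'.

Lemma LS_eq (p q : LSMor B) : lsf p = lsf q -> lssrc p = lssrc q -> lsu p = lsu q -> p = q.
Proof. destruct p, q; simpl; intros; subst; reflexivity. Qed.

Lemma LScmp_hom p q X A Y B' Z D : LSH p X A Y B' -> LSH q Y B' Z D -> LSH (LScmp p q) X A Z D.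
Proof. destruct p as [fp Ap up], q as [fq Aq uq]. unfold LSH; simpl.
 intros (H1&H2&H3&H4&H5) (K1&K2&K3&K4&K5). subst.
 repeat split; dc_eq. Qed.

Lemma LScmp_assoc p q r X A Y B' Z D W E : LSH p X A Y B' -> LSH q Y B' Z D -> LSH r Z D W E ->
  LScmp (LScmp p q) r = LScmp p (LScmp q r).
Proof. destruct p as [fp Ap up], q as [fq Aq uq], r as [fr Ar ur]. unfold LSH; simpl.
 intros (H1&H2&H3&H4&H5) (K1&K2&K3&K4&K5) (J1&J2&J3&J4&J5). subst.
 unfold LScmp; simpl. f_equal.
 - rewrite cmp_assoc by dc_eq. reflexivity.
 - rewrite dom_cmp by dc_eq. rewrite Fm_cmp by dc_eq.
   rewrite (tm_cmp _ (Fm B fp) _ (Fm B fq) uq) by dc_eq.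
   rewrite (tm_cmp_b _ _ (Fm B fp)) by dc_eq.
   rewrite <- tm_assoc. rewrite <- (tm_assoc _ (Fm B fp) (Fm B fp) up).
   rewrite K1. ra.
   rewrite <- (cmp_assoc _ (tm (Fm B fp) up) (tm (cX B _) _)) by dc_eq.
   rewrite <- tm_cmp by dc_eq. rewrite (cmp_idr' _ up) by dc_eq.
   rewrite c_nat. rewrite tm_cmp_a by dc_eq. rewrite H4.
   rewrite <- (tm_id _ (Fo B (dom fp)) A). rewrite <- tm_assoc.
   rewrite <- !cmp_assoc by dc_eq. do 3 f_equal.
   autorewrite with dcU. rewrite <- !tm_cmp by dc_eq. idl.
   f_equal. symmetry. apply coassoc.
Qed.
Lemma c_ww X : cX B X ;; tm (wX B X) (wX B X) = wX B X.
Proof. rewrite (tm_split _ (wX B X) (wX B X)). autorewrite with dcU. unfold wX at 3. rewrite tm_unl.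
 fold (wX B X). rewrite <- cmp_assoc by dc_eq. autorewrite with dcU. rewrite counit_l. idl. reflexivity. Qed.

Lemma LScmp_w_lsu p X A Y B' f2 A2 u : LSH p X A Y B' -> dom u = B' ->
  lsu (LScmp p (mkLS f2 A2 (tm (wX B Y) u))) = lsu p ;; u.
Proof. destruct p as [fp Ap up]. unfold LSH; simpl. intros (H1&H2&H3&H4&H5) Hu. subst.
 unfold LScmp; simpl. ra. rewrite <- tm_cmp by dc_eq. rewrite w_nat.
 rewrite (tm_split _ (wX B (dom fp)) (up ;; u)). rewrite (dom_cmp _ up u) by dc_eq. rewrite cwX. rewrite <- cmp_assoc by dc_eq. rewrite H4.
 rewrite <- (tm_id _ (Fo B (dom fp)) A). rewrite <- tm_assoc. rewrite <- tm_cmp by dc_eq.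
 rewrite counit_l. idl. rewrite tm_id. idl. autorewrite with dcU. apply tm_unl. Qed.

Lemma LScmp_w p X A Y B' u : LSH p X A Y B' -> dom u = B' ->
  LScmp p (mkLS (idm Y) B' (tm (wX B Y) u)) = mkLS (lsf p) (lssrc p) (lsu p ;; u).
Proof. intros H Hu. apply LS_eq.
 - simpl. destruct H as (H1&H2&_). idr. reflexivity.
 - reflexivity.
 - rewrite (LScmp_w_lsu _ X A Y B'); auto. Qed.

Lemma LScmp_idr p X A Y B' : LSH p X A Y B' -> LScmp p (LSid B Y B') = p.
Proof. intro H. unfold LSid. rewrite (LScmp_w _ X A Y B') by (auto; dc_eq).
 destruct p as [fp Ap up]. destruct H as (H1&H2&H3&H4&H5). simpl in *. idr. reflexivity. Qed.

Lemma cmp_adr' (f g h : mor L) : dom f = dom g -> cod f = cod g -> cod h = dom f -> h ;; ad f g = ad (h;;f) (h;;g).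
Proof. intros. apply (@cmp_adr _ f g h (dom f) (cod f)); try split; auto. Qed.
Lemma cmp_adl' (f g h : mor L) : dom f = dom g -> cod f = cod g -> dom h = cod f -> ad f g ;; h = ad (f;;h) (g;;h).
Proof. intros. apply (@cmp_adl _ f g h (dom f) (cod f)); try split; auto. Qed.
Lemma ad_zr_l (f : mor L) a b : dom f = a -> cod f = b -> ad (zr a b) f = f.
Proof. intros. rewrite (@ad_comm _ (zr a b) f a b). apply (@ad_zr _ f a b). split; auto.
 apply zr_hom. split; auto. Qed.
Lemma ad_zr_r (f : mor L) a b : dom f = a -> cod f = b -> ad f (zr a b) = f.
Proof. intros. apply (@ad_zr _ f a b). split; auto. Qed.

Lemma pair_q2 (a b : mor L) A1 A2 : dom a = dom b -> cod a = A1 -> cod b = A2 ->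
  ad (a ;; i1 A1 A2) (b ;; i2 A1 A2) ;; q2 A1 A2 = b.
Proof. intros. rewrite cmp_adl' by dc_eq. ra. rewrite i1_q2, i2_q2. rewrite cmp_zrr by dc_eq. idr.
 apply ad_zr_l; dc_eq. Qed.
Lemma pair_q1 (a b : mor L) A1 A2 : dom a = dom b -> cod a = A1 -> cod b = A2 ->
  ad (a ;; i1 A1 A2) (b ;; i2 A1 A2) ;; q1 A1 A2 = a.
Proof. intros. rewrite cmp_adl' by dc_eq. ra. rewrite i1_q1, i2_q1. rewrite cmp_zrr by dc_eq. idr.
 apply ad_zr_r; dc_eq. Qed.

End S2.



Section S.
Variable G : GDSC.
Local Notation B := (base G).
Local Notation C := (cc (LC (base G))).
Local Notation L := (sc (LL (base G))).
Local Notation LL0 := (LL (base G)).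
Local Notation LC0 := (LC (base G)).
Local Notation T := (Tmor (lam G) (Tv G)).

Lemma tm_un_post (f g : mor L) a : cod f = un -> dom g = a -> tm f (idm a) ;; g = tm f g.
Proof. intros H1 H2. rewrite <- (tm_unl _ g) at 1. rewrite <- H1. rewrite <- tm_cmp by dc_eq. idr. idl. reflexivity. Qed.
Lemma tm_un_post2 (f a g : mor L) : cod f = un -> cod a = dom g -> tm f a ;; g = tm f (a ;; g).
Proof. intros H1 H2. rewrite <- (tm_unl _ g) at 1. rewrite <- H1. rewrite <- tm_cmp by dc_eq. idr. reflexivity. Qed.

Lemma LSpair_dist p q r X A Y B' Z1 D1 Z2 D2 : LSH G p X A Y B' -> LSH G q Y B' Z1 D1 -> LSH G r Y B' Z2 D2 ->
  LScmp p (LSpair q r) = LSpair (LScmp p q) (LScmp p r).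
Proof. destruct p as [fp Ap up], q as [fq Aq uq], r as [fr Ar ur]. unfold LSH; simpl.
 intros (H1&H2&H3&H4&H5) (K1&K2&K3&K4&K5) (J1&J2&J3&J4&J5). subst.
 apply LS_eq; simpl.
 - rewrite pr_cmp by dc_eq. reflexivity.
 - reflexivity.
 - rewrite cmp_adr' by dc_eq. rewrite (cod_cmp _ _ uq) by dc_eq. rewrite (cod_cmp _ _ ur) by dc_eq.
   ra. reflexivity.
Qed.

Lemma T_hom f : LSH G (T f) (dom f) (lam G (dom f)) (cod f) (lam G (cod f)).
Proof. unfold LSH; simpl. repeat split; dc_eq. Qed.
Lemma T_hom' f X Y : dom f = X -> cod f = Y -> LSH G (T f) X (lam G X) Y (lam G Y).
Proof. intros <- <-. apply T_hom. Qed.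
Lemma phinv_hom' X Y : LSH G (phinv G X Y) (prd X Y) (bp (lam G X) (lam G Y)) (prd X Y) (lam G (prd X Y)).
Proof. destruct (phinv_hom G X Y) as ((H1&H2)&H3&H4&H5). unfold LSH. auto. Qed.
Lemma fib_i2_hom Z A1 A2 : LSH G (fib_i2 B Z A1 A2) Z A2 Z (bp A1 A2).
Proof. unfold LSH; simpl. repeat split; dc_eq. Qed.
Lemma i2XY_hom X Y : LSH G (i2XY (lam G) (phinv G) X Y) (prd X Y) (lam G Y) (prd X Y) (lam G (prd X Y)).
Proof. unfold i2XY. eapply LScmp_hom. apply fib_i2_hom. apply phinv_hom'. Qed.
Lemma phi_hom X Y : LSH G (phi (lam G) (Tv G) X Y) (prd X Y) (lam G (prd X Y)) (prd X Y) (bp (lam G X) (lam G Y)).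
Proof. unfold LSH, phi, LSpair; simpl. repeat split; dc_eq. Qed.

Lemma pr_p1p2 (X Y : ob C) : pr (p1 X Y) (p2 X Y) = idm (prd X Y).
Proof. assert (H := pr_eta _ (idm (prd X Y)) X Y (cod_idm _ _)). rewrite !cmp_idl' in H by dc_eq. exact H. Qed.

Lemma phinv_f X Y : lsf (phinv G X Y) = idm (prd X Y).
Proof. assert (H := f_equal (@lsf _) (phi_phinv G X Y)). simpl in H. rewrite pr_p1p2 in H.
 rewrite cmp_idl' in H. exact H. destruct (phinv_hom G X Y) as ((H1&H2)&_). exact H1. Qed.

Lemma phinv_Tp2 X Y : LScmp (phinv G X Y) (T (p2 X Y)) = mkLS (p2 X Y) (bp (lam G X) (lam G Y)) (tm (wX B (prd X Y)) (q2 (lam G X) (lam G Y))).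
Proof. destruct (phinv_hom' X Y) as (H1&H2&H3&H4&H5).
 assert (H := f_equal (@lsu _) (phinv_phi G X Y)). unfold phi, LSpair in H; simpl in H.
 apply LS_eq; simpl.
 - rewrite phinv_f. idl. reflexivity.
 - exact H3.
 - rewrite H3 in H. rewrite H3.
   transitivity (tm (cX B (dom (lsf (phinv G X Y)))) (idm (bp (lam G X) (lam G Y)));; tm (Fm B (lsf (phinv G X Y))) (lsu (phinv G X Y));;
     (ad (Tv G (p1 X Y);; i1 (cod (Tv G (p1 X Y))) (cod (Tv G (p2 X Y))))
       (Tv G (p2 X Y);; i2 (cod (Tv G (p1 X Y))) (cod (Tv G (p2 X Y)))) ;; q2 (cod (Tv G (p1 X Y))) (cod (Tv G (p2 X Y))))).
   + f_equal. symmetry. apply pair_q2; dc_eq.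
   + rewrite <- cmp_assoc by dc_eq. rewrite H. autorewrite with dcU. apply tm_un_post; dc_eq.
Qed.

Lemma phinv_Tp1 X Y : LScmp (phinv G X Y) (T (p1 X Y)) = mkLS (p1 X Y) (bp (lam G X) (lam G Y)) (tm (wX B (prd X Y)) (q1 (lam G X) (lam G Y))).
Proof. destruct (phinv_hom' X Y) as (H1&H2&H3&H4&H5).
 assert (H := f_equal (@lsu _) (phinv_phi G X Y)). unfold phi, LSpair in H; simpl in H.
 apply LS_eq; simpl.
 - rewrite phinv_f. idl. reflexivity.
 - exact H3.
 - rewrite H3 in H. rewrite H3.
   transitivity (tm (cX B (dom (lsf (phinv G X Y)))) (idm (bp (lam G X) (lam G Y)));; tm (Fm B (lsf (phinv G X Y))) (lsu (phinv G X Y));;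
     (ad (Tv G (p1 X Y);; i1 (cod (Tv G (p1 X Y))) (cod (Tv G (p2 X Y))))
       (Tv G (p2 X Y);; i2 (cod (Tv G (p1 X Y))) (cod (Tv G (p2 X Y)))) ;; q1 (cod (Tv G (p1 X Y))) (cod (Tv G (p2 X Y))))).
   + f_equal. symmetry. apply pair_q1; dc_eq.
   + rewrite <- cmp_assoc by dc_eq. rewrite H. autorewrite with dcU. apply tm_un_post; dc_eq.
Qed.

Lemma i2XY_Tp2 X Y : LScmp (i2XY (lam G) (phinv G) X Y) (T (p2 X Y)) = mkLS (p2 X Y) (lam G Y) (tm (wX B (prd X Y)) (idm (lam G Y))).
Proof. unfold i2XY. erewrite LScmp_assoc; [ | apply fib_i2_hom | apply phinv_hom' | apply T_hom'; dc_eq ].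
 rewrite phinv_Tp2. apply LS_eq.
 - simpl. idl. reflexivity.
 - reflexivity.
 - erewrite (LScmp_w_lsu _ (fib_i2 B (prd X Y) (lam G X) (lam G Y))); [ | apply fib_i2_hom | dc_eq].
   simpl. rewrite tm_un_post2 by dc_eq. rewrite i2_q2. reflexivity.
Qed.

Lemma i2XY_Tp1 X Y : LScmp (i2XY (lam G) (phinv G) X Y) (T (p1 X Y)) = mkLS (p1 X Y) (lam G Y) (tm (wX B (prd X Y)) (zr (lam G Y) (lam G X))).
Proof. unfold i2XY. erewrite LScmp_assoc; [ | apply fib_i2_hom | apply phinv_hom' | apply T_hom'; dc_eq ].
 rewrite phinv_Tp1. apply LS_eq.
 - simpl. idl. reflexivity.
 - reflexivity.
 - erewrite (LScmp_w_lsu _ (fib_i2 B (prd X Y) (lam G X) (lam G Y))); [ | apply fib_i2_hom | dc_eq].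
   simpl. rewrite tm_un_post2 by dc_eq. rewrite i2_q1. reflexivity.
Qed.

End S.



Section S.
Variable G : GDSC.
Local Notation B := (base G).
Local Notation C := (cc (LC (base G))).
Local Notation L := (sc (LL (base G))).
Local Notation LL0 := (LL (base G)).
Local Notation LC0 := (LC (base G)).
Local Notation T := (Tmor (lam G) (Tv G)).

Lemma pr_prm (a b f g : mor C) : dom a = dom b -> cod a = dom f -> cod b = dom g -> pr a b ;; prm f g = pr (a;;f) (b;;g).
Proof. intros. unfold prm. rewrite pr_cmp by dc_eq. rewrite <- !cmp_assoc by dc_eq.
 rewrite pr_p1' by dc_eq. rewrite pr_p2' by dc_eq. reflexivity. Qed.

Lemma nn_nat' (f g : mor L) a b a' b' : dom f = a -> dom g = b -> cod f = a' -> cod g = b' ->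
  nn B a b ;; Um B (tm f g) = prm (Um B f) (Um B g) ;; nn B a' b'.
Proof. intros <- <- <- <-. symmetry. apply nn_nat. Qed.

Lemma et_w X : et B X ;; Um B (wX B X) = bng X ;; n0 B.
Proof. unfold wX. rewrite Um_cmp by dc_eq. rewrite <- cmp_assoc by dc_eq.
 assert (Hn := et_nat B (bng X)). autorewrite with dcU in Hn. rewrite <- Hn. ra. rewrite <- et_mon1. ra.
 rewrite <- Um_cmp by dc_eq. rewrite m1_m1i. rewrite Um_id. idr. reflexivity. Qed.

Definition pA (X : ob C) (A : ob L) : LSMor B := mkLS (idm X) (bang B A) (tm (wX B X) (ep B A)).

Lemma F1 X A : pr (p1 X (Uo B A)) (p2 X (Uo B A) ;; et B (Uo B A)) ;; (brace (pA X A) ;; p2 X (Uo B A)) = p2 X (Uo B A).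
Proof. unfold brace, pA. cbn [lsf lssrc lsu]. rewrite !dom_idm.
 rewrite pr_p2' by dc_eq. ra. rewrite (nn_nat' (wX B X) (ep B A) _ _ un A) by dc_eq.
 rewrite <- !cmp_assoc by dc_eq. rewrite pr_prm by dc_eq. rewrite pr_prm by dc_eq.
 ra. idl. rewrite et_w. rewrite tri2. idr.
 rewrite <- (cmp_assoc _ (p1 _ _) (bng _)) by dc_eq.
 rewrite (bng_u _ (p1 X (Uo B A) ;; bng X) (prd X (Uo B A))) by dc_eq.
 transitivity (pr (bng (prd X (Uo B A))) (p2 X (Uo B A)) ;; (prm (n0 B) (idm (Uo B A)) ;; nn B un A)).
 - rewrite <- cmp_assoc by dc_eq. rewrite pr_prm by dc_eq. idr. autorewrite with dcU. reflexivity.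
 - rewrite nn_unl. apply pr_p2'; dc_eq.
Qed.

End S.



Section S.
Variable G : GDSC.
Local Notation B := (base G).
Local Notation C := (cc (LC (base G))).
Local Notation L := (sc (LL (base G))).
Local Notation LL0 := (LL (base G)).
Local Notation LC0 := (LC (base G)).
Local Notation T := (Tmor (lam G) (Tv G)).

Lemma dbrace X A : dom (brace (pA G X A)) = prd X (Uo B (bang B A)).
Proof. unfold brace, pA. cbn [lsf lssrc lsu]. dc_eq. Qed.
Lemma cbrace X A : cod (brace (pA G X A)) = prd X (Uo B A).
Proof. unfold brace, pA. cbn [lsf lssrc lsu]. dc_eq. Qed.

Lemma pA_f X A : lsf (pA G X A) = idm X. Proof. reflexivity. Qed.
Lemma pA_s X A : lssrc (pA G X A) = bang B A. Proof. reflexivity. Qed.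
Lemma pA_u X A : lsu (pA G X A) = tm (wX B X) (ep B A). Proof. reflexivity. Qed.
Lemma Wm_hom X A : LSH G (Wm (pA G X A)) (prd X (Uo B (bang B A))) (bang B A) (prd X (Uo B A)) (lam G (Uo B A)).
Proof. unfold LSH. unfold Wm. cbn [lsf lssrc lsu]. rewrite dbrace, cbrace.
 rewrite pA_f, pA_s, pA_u. repeat split; try reflexivity; dc_eq. Qed.

Lemma star X A : LScmp (i2XY (lam G) (phinv G) X (Uo B (bang B A))) (T (brace (pA G X A) ;; p2 X (Uo B A)))
  = LScmp (Wm (pA G X A)) (mkLS (p2 X (Uo B A)) (lam G (Uo B A)) (tm (wX B (prd X (Uo B A))) (idm (lam G (Uo B A))))).
Proof.
 assert (H : LScmp (Wm (pA G X A)) (i2XY (lam G) (phinv G) X (Uo B A)) = LScmp (i2XY (lam G) (phinv G) X (Uo B (bang B A))) (T (brace (pA G X A)))).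
 { assert (H0 := t3 G (pA G X A)).
   change (cod (lsf (pA G X A))) with (cod (idm X)) in H0.
   change (dom (lsf (pA G X A))) with (dom (idm X)) in H0.
   change (lssrc (pA G X A)) with (bang B A) in H0.
   change (cod (lsu (pA G X A))) with (cod (tm (wX B X) (ep B A))) in H0.
   replace (cod (tm (wX B X) (ep B A))) with A in H0 by dc_eq.
   rewrite cod_idm, dom_idm in H0. apply H0. unfold pA; cbn [lsf lssrc lsu]. dc_eq. }
 assert (H' := f_equal (fun s => LScmp s (T (p2 X (Uo B A)))) H). cbv beta in H'.
 erewrite LScmp_assoc in H'; [ | apply Wm_hom | apply i2XY_hom | apply T_hom'; dc_eq ].
 rewrite i2XY_Tp2 in H'.
 erewrite LScmp_assoc in H'; [ | apply i2XY_hom | apply T_hom'; [apply dbrace | apply cbrace] | apply T_hom'; dc_eq ].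
 rewrite <- T_cmp in H'. symmetry. exact H'. rewrite cbrace. dc_eq.
Qed.

End S.



Hint Rewrite dbrace cbrace : dcU.
Section S.
Variable G : GDSC.
Local Notation B := (base G).
Local Notation C := (cc (LC (base G))).
Local Notation L := (sc (LL (base G))).
Local Notation T := (Tmor (lam G) (Tv G)).
Variable X : ob C.
Variable A : ob L.
Local Notation Y := (Uo B A).
Local Notation Z := (Uo B (bang B A)).
Local Notation h := (p2 X Y ;; et B Y).
Local Notation k := (pr (p1 X Y) h).
Local Notation g := (brace (pA G X A) ;; p2 X Y).
Local Notation I2 := (i2XY (lam G) (phinv G)).
Local Notation D := (LScmp (I2 X Y) (T h)).
Local Notation v := (lsu D).
Local Notation lm := (lam G).

Lemma w_nat' (f : mor C) Y' X' : cod f = Y' -> dom f = X' -> Fm B f ;; wX B Y' = wX B X'.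
Proof. intros <- <-. apply w_nat. Qed.

Lemma star2 : LScmp (I2 X Z) (T g) = mkLS g (bang B A) (tm (wX B (prd X Z)) (ep B A)).
Proof. rewrite star. apply LS_eq.
 - reflexivity.
 - reflexivity.
 - rewrite (LScmp_w_lsu _ _ (prd X Z) (bang B A) (prd X Y) (lm Y)); [ | apply Wm_hom | dc_eq].
   unfold Wm. cbn [lsf lssrc lsu]. rewrite pA_f, pA_s, pA_u. idr.
 rewrite dom_idm. rewrite <- tm_cmp by dc_eq. idl. rewrite (w_nat' (p1 X Z) X (prd X Z)) by dc_eq. reflexivity.
Qed.

Lemma D_hom : LSH G D (prd X Y) (lm Y) Z (lm Z).
Proof. eapply LScmp_hom. apply i2XY_hom. apply T_hom'; dc_eq. Qed.

Lemma E3 : LScmp (I2 X Y) (T k) = LScmp (mkLS k (lm Y) v) (I2 X Z).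
Proof.
 assert (Hi := i2XY_hom G X Y). assert (Hk : LSH G (T k) (prd X Y) (lm (prd X Y)) (prd X Z) (lm (prd X Z))) by (apply T_hom'; dc_eq).
 assert (Hik := LScmp_hom _ _ _ _ _ _ _ _ _ Hi Hk).
 rewrite <- (LScmp_idr _ _ _ _ _ _ Hik). rewrite <- (phi_phinv G X Z).
 rewrite <- (LScmp_assoc _ _ _ _ _ _ _ _ _ _ _ _ Hik (phi_hom G X Z) (phinv_hom' G X Z)).
 unfold phi at 1.
 rewrite (LSpair_dist _ _ _ _ _ _ _ _ X (lm X) Z (lm Z) Hik) by (apply T_hom'; dc_eq).
 rewrite (LScmp_assoc _ _ _ _ _ _ _ _ _ _ X (lm X) Hi Hk) by (apply T_hom'; dc_eq).
 rewrite (LScmp_assoc _ _ _ _ _ _ _ _ _ _ Z (lm Z) Hi Hk) by (apply T_hom'; dc_eq).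
 rewrite <- !T_cmp by dc_eq.
 rewrite pr_p1' by dc_eq. rewrite pr_p2' by dc_eq.
 rewrite i2XY_Tp1.
 transitivity (LScmp (LScmp (mkLS k (lm Y) v) (fib_i2 B (prd X Z) (lm X) (lm Z))) (phinv G X Z)).
 2:{ destruct D_hom as (H1&H2&H3&H4&H5).
     rewrite (LScmp_assoc _ _ _ _ (prd X Y) (lm Y) (prd X Z) (lm Z) (prd X Z) (bp (lm X) (lm Z)) (prd X Z) (lm (prd X Z))).
     reflexivity. unfold LSH; cbn [lsf lssrc lsu]; repeat split; dc_eq. apply fib_i2_hom. apply phinv_hom'. }
 f_equal. unfold fib_i2. rewrite (LScmp_w _ _ (prd X Y) (lm Y) (prd X Z) (lm Z)).
 2:{ destruct D_hom as (H1&H2&H3&H4&H5). unfold LSH; cbn [lsf lssrc lsu]; repeat split; dc_eq. }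
 2:{ dc_eq. }
 cbn [lsf lssrc lsu]. destruct D_hom as (H1&H2&H3&H4&H5).
 apply LS_eq; cbn [LSpair lsf lssrc lsu].
 - f_equal. cbn [LScmp lsf i2XY fib_i2 Tmor]. rewrite phinv_f. idl. idl. reflexivity.
 - reflexivity.
 - replace (cod (tm (wX B (prd X Y)) (zr (lm Y) (lm X)))) with (lm X) by dc_eq.
   replace (cod (lsu D)) with (lm Z) by dc_eq.
   rewrite tm_zrr. rewrite cmp_zrl by dc_eq. apply ad_zr_l; dc_eq.
Qed.

Lemma core : lsu (Dcal G X A) ;; ep B A = tm (wX B (prd X Y)) (idm A).
Proof.
 assert (E1 := i2XY_Tp2 G X Y).
 assert (E2 : T (p2 X Y) = LScmp (T k) (T g)).
 { rewrite <- T_cmp by dc_eq. f_equal. symmetry. apply F1. }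
 rewrite E2 in E1.
 assert (Hv : LSH G (mkLS k (lm Y) v) (prd X Y) (lm Y) (prd X Z) (lm Z)).
 { destruct D_hom as (H1&H2&H3&H4&H5). unfold LSH; cbn [lsf lssrc lsu]; repeat split; dc_eq. }
 rewrite <- (LScmp_assoc _ _ _ _ (prd X Y) (lm Y) (prd X Y) (lm (prd X Y)) (prd X Z) (lm (prd X Z)) Y (lm Y)) in E1;
   [ | apply i2XY_hom | apply T_hom'; dc_eq | apply T_hom'; dc_eq ].
 rewrite E3 in E1.
 rewrite (LScmp_assoc _ _ _ _ (prd X Y) (lm Y) (prd X Z) (lm Z) (prd X Z) (lm (prd X Z)) Y (lm Y)) in E1;
   [ | exact Hv | apply i2XY_hom | apply T_hom'; dc_eq ].
 rewrite star2 in E1.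
 apply (f_equal (@lsu _)) in E1.
 rewrite (LScmp_w_lsu _ _ (prd X Y) (lm Y) (prd X Z) (lm Z)) in E1; [ | exact Hv | dc_eq ].
 cbn [lsu] in E1. rewrite t2 in E1. exact E1.
Qed.

End S.



Section S.
Variable G : GDSC.
Local Notation B := (base G).
Local Notation C := (cc (LC (base G))).
Local Notation L := (sc (LL (base G))).
Local Notation T := (Tmor (lam G) (Tv G)).
Local Notation lm := (lam G).

Lemma Dcal_facts X A : lssrc (Dcal G X A) = lm (Uo B A) /\ dom (lsu (Dcal G X A)) = tn (Fo B (prd X (Uo B A))) (lm (Uo B A))
  /\ cod (lsu (Dcal G X A)) = lm (Uo B (bang B A)).
Proof. destruct (D_hom G X A) as (H1&H2&H3&H4&H5). split; [exact H3 | split; [exact H4 | exact H5]]. Qed.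

Lemma mm_w X Y : mm B X Y ;; wX B (prd X Y) = tm (wX B X) (wX B Y).
Proof. rewrite <- mmi_w. rewrite <- cmp_assoc by dc_eq. rewrite mm_mmi. idl. reflexivity. Qed.

Lemma sg_w X A : sg (Fo B X) (bang B A) ;; tm (wA B A) (wX B X) = tm (wX B X) (wA B A).
Proof. assert (H := sg_nat _ (wX B X) (wA B A)). autorewrite with dcU in H. rewrite sg_un in H.
 rewrite cmp_idr' in H by dc_eq. symmetry. exact H. Qed.

Lemma Sigma_hom X A : LSH G (Sigma G X A (Dcal G X A)) X (tn (bang B A) (lm (Uo B A))) X (tn (bang B A) (bang B A)).
Proof. destruct (Dcal_facts X A) as (H1&H2&H3). unfold LSH, Sigma. cbn [lsf lssrc lsu].
 rewrite H1. repeat split; dc_eq. Qed.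

Lemma inner X A : tm (cX B X) (idm (bang B A)) ;; tm (idm (Fo B X)) (sg (Fo B X) (bang B A)) ;;
  tm (tm (wX B X) (wX B (Uo B A))) (wX B X) = tm (wX B X) (wX B (Uo B A)).
Proof. assert (Hs := sg_w X A). unfold wA in Hs.
 rewrite (tm_assoc _ (wX B X) (wX B (Uo B A)) (wX B X)).
 ra. rewrite <- (tm_cmp _ (idm (Fo B X))) by dc_eq. idl. rewrite Hs.
 rewrite <- (tm_assoc _ (wX B X) (wX B X)). rewrite <- tm_cmp by dc_eq. idl. rewrite c_ww. reflexivity.
Qed.

Lemma main X A : LScmp (deriv G X A) (derX G X A) = fibtens X (wkX G X A) (LSid B X A).
Proof.
 assert (Hcore := core G X A).
 assert (HS := Sigma_hom X A).
 destruct (Dcal_facts X A) as (K1&K2&K3).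
 unfold deriv, mu. rewrite tm_assoc.
 rewrite (LScmp_w _ _ X (tn (bang B A) (lm (Uo B A))) X (tn (bang B A) (bang B A))); [ | exact HS | dc_eq ].
 unfold derX.
 rewrite (LScmp_w _ _ X (tn (bang B A) (lm (Uo B A))) X (bang B A)).
 2:{ destruct HS as (H1&H2&H3&H4&H5). unfold LSH; cbn [lsf lssrc lsu]. repeat split; dc_eq. }
 2:{ dc_eq. }
 apply LS_eq; cbn [lsf lssrc lsu fibtens LSid wkX Sigma].
 - reflexivity.
 - rewrite K1. rewrite t2. reflexivity.
 - rewrite K1. rewrite t2.
   assert (Hs := sg_w X A). unfold wA in Hs. unfold wA, cA. unfold wA in Hcore.
   transitivity (tm (tm (wX B X) (wX B (Uo B A))) (idm A)).
   + ra. rewrite (tm_un_post _ (wX B (Uo B A)) (ep B A)) by dc_eq.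
     rewrite <- (tm_cmp _ (idm (bang B A))) by dc_eq. idl. ra. rewrite Hcore.
     rewrite <- (tm_cmp _ (mm B X (Uo B A))) by dc_eq. rewrite mm_w. idl.
     rewrite (tm_assoc _ (wX B X) (wX B (Uo B A)) (idm A)).
     rewrite <- (tm_assoc _ (wX B (Uo B A)) (wX B X)).
     rewrite <- (tm_cmp _ (sg _ _)) by dc_eq. rewrite Hs. idl.
     rewrite <- (tm_assoc _ (tm (wX B X) (wX B (Uo B A))) (wX B (Uo B A)) (idm A)).
     rewrite <- tm_cmp by dc_eq. idl.
     rewrite (tm_assoc _ (wX B X) (wX B (Uo B A)) (wX B (Uo B A))).
     rewrite <- (tm_cmp _ (idm (Fo B X))) by dc_eq. idl. rewrite c_ww. apply tm_assoc.
   + rewrite <- (tm_id _ (bang B A) A). rewrite <- !tm_assoc.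
     rewrite <- !tm_cmp by dc_eq. idl. idl.
     f_equal. symmetry. apply inner.
Qed.

End S.

Theorem proposition4p30 (G : GDSC) (X : ob (cc (LC (base G)))) (A : ob (sc (LL (base G)))) :
  LScmp (deriv G X A) (derX G X A) = fibtens X (wkX G X A) (LSid (base G) X A).
Proof. exact (main G X A). Qed.
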